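(* (Expressiveness.) The assertion language of IPPL is expressive: for every command $c$ and every assertion $B$ there is an assertion $w[\![c,B]\!]$ such that for every interpretation $I$, $\{\sigma\mid \sigma\models^I w[\![c,B]\!]\}=wp^I[\![c,B]\!]$.
   Context: IPPL: let $\mathbf{Loc}$ be a set of locations $X$, $\mathbf{Intvar}$ a set of integer variables $i$; states are $\sigma:\mathbf{Loc}\to\mathbb{Z}$, interpretations are $I:\mathbf{Intvar}\to\mathbb{Z}$. Arithmetic expressions $a::=n\mid X\mid i\mid a_0+a_1\mid a_0-a_1\mid a_0\times a_1$; Boolean expressions $b::=\mathbf{true}\mid\mathbf{false}\mid a_0=a_1\mid a_0\leq a_1\mid\neg b\mid b_0\wedge b_1\mid b_0\vee b_1$; assertions $A::=\mathbf{true}\mid\mathbf{false}\mid a_0=a_1\mid a_0\leq a_1\mid\neg A\mid A_0\wedge A_1\mid A_0\vee A_1\mid A_0\Rightarrow A_1\mid\forall i.A\mid\exists i.A$, with the usual satisfaction relation $\sigma\models^I A$. Commands: $c::=\mathbf{skip}\mid X:=a\mid c_0;c_1\mid\mathbf{if}\ b\ \mathbf{then}\ c_0\ \mathbf{else}\ c_1\mid\mathbf{while}\ b\ \mathbf{do}\ c\mid c_0\parallel c_1$ (expressions in commands contain no integer variables). Execution $\langle c,\sigma\rangle\rightarrow\sigma'$ is the least relation closed under the standard big-step rules for skip, assignment ($\sigma[X\mapsto$ value of $a$ in $\sigma]$), sequencing, conditional and while loop, together with: if there are states $\sigma'',\sigma'''$ with $\langle c_0,\sigma\rangle\rightarrow\sigma''$,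 $\langle c_1,\sigma''\rangle\rightarrow\sigma'$, $\langle c_1,\sigma\rangle\rightarrow\sigma'''$ and $\langle c_0,\sigma'''\rangle\rightarrow\sigma'$ then $\langle c_0\parallel c_1,\sigma\rangle\rightarrow\sigma'$. The weakest precondition is $wp^I[\![c,B]\!]=\{\sigma\mid$ for all $\sigma'$, if $\langle c,\sigma\rangle\rightarrow\sigma'$ then $\sigma'\models^I B\}$. *)

(* Defs.v *)
From Stdlib Require Import ZArith.
Open Scope Z_scope.

Definition Loc := nat.
Definition Intvar := nat.

Definition state := Loc -> Z.
Definition interp := Intvar -> Z.

Inductive aexp : Type :=
| ANum : Z -> aexp
| ALoc : Loc -> aexp
| AVar : Intvar -> aexp
| APlus : aexp -> aexp -> aexp
| AMinus : aexp -> aexp -> aexp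
| AMult : aexp -> aexp -> aexp.

Fixpoint aeval (I : interp) (s : state) (a : aexp) : Z :=
  match a with
  | ANum n => n
  | ALoc X => s X
  | AVar i => I i
  | APlus a0 a1 => aeval I s a0 + aeval I s a1
  | AMinus a0 a1 => aeval I s a0 - aeval I s a1
  | AMult a0 a1 => aeval I s a0 * aeval I s a1
  end.

(* Expressions occurring in commands: no integer variables. *)
Inductive caexp : Type :=
| CNum : Z -> caexp
| CLoc : Loc -> caexp
| CPlus : caexp -> caexp -> caexp
| CMinus : caexp -> caexp -> caexp
| CMult : caexp -> caexp -> caexp.

Fixpoint caeval (s : state) (a : caexp) : Z :=
  match a with
  | CNum n => n
  | CLoc X => s X
  | CPlus a0 a1 => caeval s a0 + caeval s a1
  | CMinus a0 a1 => caeval s a0 - caeval s a1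
  | CMult a0 a1 => caeval s a0 * caeval s a1
  end.

Inductive cbexp : Type :=
| CTrue : cbexp
| CFalse : cbexp
| CEq : caexp -> caexp -> cbexp
| CLe : caexp -> caexp -> cbexp
| CNot : cbexp -> cbexp
| CAnd : cbexp -> cbexp -> cbexp
| COr : cbexp -> cbexp -> cbexp.

Fixpoint cbeval (s : state) (b : cbexp) : bool :=
  match b with
  | CTrue => true
  | CFalse => false
  | CEq a0 a1 => Z.eqb (caeval s a0) (caeval s a1)
  | CLe a0 a1 => Z.leb (caeval s a0) (caeval s a1)
  | CNot b0 => negb (cbeval s b0)
  | CAnd b0 b1 => andb (cbeval s b0) (cbeval s b1)
  | COr b0 b1 => orb (cbeval s b0) (cbeval s b1)
  end.

Inductive assn : Type :=
| ATrue : assn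
| AFalse : assn
| AEq : aexp -> aexp -> assn
| ALe : aexp -> aexp -> assn
| ANot : assn -> assn
| AAnd : assn -> assn -> assn
| AOr : assn -> assn -> assn
| AImp : assn -> assn -> assn
| AForall : Intvar -> assn -> assn
| AExists : Intvar -> assn -> assn.

Definition upd_interp (I : interp) (i : Intvar) (n : Z) : interp :=
  fun j => if Nat.eqb j i then n else I j.

Fixpoint sat (I : interp) (s : state) (A : assn) : Prop :=
  match A with
  | ATrue => True
  | AFalse => False
  | AEq a0 a1 => aeval I s a0 = aeval I s a1
  | ALe a0 a1 => aeval I s a0 <= aeval I s a1
  | ANot A0 => ~ sat I s A0
  | AAnd A0 A1 => sat I s A0 /\ sat I s A1
  | AOr A0 A1 => sat I s A0 \/ sat I s A1
  | AImp A0 A1 => sat I s A0 -> sat I s A1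
  | AForall i A0 => forall n : Z, sat (upd_interp I i n) s A0
  | AExists i A0 => exists n : Z, sat (upd_interp I i n) s A0
  end.

Inductive com : Type :=
| Skip : com
| Assign : Loc -> caexp -> com
| Seq : com -> com -> com
| If : cbexp -> com -> com -> com
| While : cbexp -> com -> com
| Par : com -> com -> com.

Definition upd_state (s : state) (X : Loc) (n : Z) : state :=
  fun Y => if Nat.eqb Y X then n else s Y.

Inductive exec : com -> state -> state -> Prop :=
| E_Skip : forall s, exec Skip s s
| E_Assign : forall s X a, exec (Assign X a) s (upd_state s X (caeval s a))
| E_Seq : forall c0 c1 s s'' s',
    exec c0 s s'' -> exec c1 s'' s' -> exec (Seq c0 c1) s s'
| E_IfTrue : forall b c0 c1 s s',
    cbeval s b = true -> exec c0 s s' -> exec (If b c0 c1) s s'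
| E_IfFalse : forall b c0 c1 s s',
    cbeval s b = false -> exec c1 s s' -> exec (If b c0 c1) s s'
| E_WhileFalse : forall b c s,
    cbeval s b = false -> exec (While b c) s s
| E_WhileTrue : forall b c s s'' s',
    cbeval s b = true -> exec c s s'' -> exec (While b c) s'' s' ->
    exec (While b c) s s'
| E_Par : forall c0 c1 s s'' s''' s',
    exec c0 s s'' -> exec c1 s'' s' ->
    exec c1 s s''' -> exec c0 s''' s' ->
    exec (Par c0 c1) s s'.

Definition wp (I : interp) (c : com) (B : assn) (s : state) : Prop :=
  forall s', exec c s s' -> sat I s' B.

(* Main.v *)
From Stdlib Require Import ZArith Lia Arith FunctionalExtensionality Znumtheory Factorial.
Require Import Defs.
Local Open Scope Z_scope.

Definition env := nat -> Z.
Definition scons {A : Type} (x : A) (g : nat -> A) : nat -> A :=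
  fun j => match j with O => x | S j' => g j' end.

Inductive tm : Type :=
| TVar (n : nat) | TNum (z : Z) | TAdd (a b : tm) | TSub (a b : tm) | TMul (a b : tm).

Fixpoint teval (e : env) (t : tm) : Z :=
  match t with
  | TVar n => e n | TNum z => z
  | TAdd a b => teval e a + teval e b
  | TSub a b => teval e a - teval e b
  | TMul a b => teval e a * teval e b
  end.

Inductive fm : Type :=
| FEq (a b : tm) | FLe (a b : tm) | FNot (f : fm) | FAnd (f g : fm) | FOr (f g : fm)
| FImp (f g : fm) | FEx (f : fm) | FAll (f : fm).

Fixpoint fsat (e : env) (f : fm) : Prop :=
  match f with
  | FEq a b => teval e a = teval e b
  | FLe a b => teval e a <= teval e b
  | FNot f => ~ fsat e f
  | FAnd f g => fsat e f /\ fsat e g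
  | FOr f g => fsat e f \/ fsat e g
  | FImp f g => fsat e f -> fsat e g
  | FEx f => exists z, fsat (scons z e) f
  | FAll f => forall z, fsat (scons z e) f
  end.

Definition upr (r : nat -> nat) : nat -> nat :=
  fun j => match j with O => O | S j' => S (r j') end.

Fixpoint tren (r : nat -> nat) (t : tm) : tm :=
  match t with
  | TVar n => TVar (r n) | TNum z => TNum z
  | TAdd a b => TAdd (tren r a) (tren r b)
  | TSub a b => TSub (tren r a) (tren r b)
  | TMul a b => TMul (tren r a) (tren r b)
  end.

Fixpoint fren (r : nat -> nat) (f : fm) : fm :=
  match f with
  | FEq a b => FEq (tren r a) (tren r b)
  | FLe a b => FLe (tren r a) (tren r b)
  | FNot f => FNot (fren r f)
  | FAnd f g => FAnd (fren r f) (fren r g)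
  | FOr f g => FOr (fren r f) (fren r g)
  | FImp f g => FImp (fren r f) (fren r g)
  | FEx f => FEx (fren (upr r) f)
  | FAll f => FAll (fren (upr r) f)
  end.

Lemma teval_ren : forall t e r, teval e (tren r t) = teval (fun j => e (r j)) t.
Proof. induction t; intros; simpl; try rewrite IHt1, IHt2; auto. Qed.

Lemma scons_upr : forall (z : Z) e r,
  (fun j => scons z e (upr r j)) = scons z (fun j => e (r j)).
Proof. intros. apply functional_extensionality. intros [|j]; reflexivity. Qed.

Lemma fsat_ren : forall f e r, fsat e (fren r f) <-> fsat (fun j => e (r j)) f.
Proof.
  induction f; intros; simpl; rewrite ?teval_ren; try tauto.
  - rewrite IHf. tauto.
  - rewrite IHf1, IHf2. tauto.
  - rewrite IHf1, IHf2. tauto.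
  - rewrite IHf1, IHf2. tauto.
  - split; intros [z H]; exists z; [rewrite IHf in H | rewrite IHf];
      rewrite ?scons_upr in *; auto.
  - split; intros H z; specialize (H z); [rewrite IHf in H | rewrite IHf];
      rewrite ?scons_upr in *; auto.
Qed.

Definition expr (P : env -> Prop) := exists f, forall e, fsat e f <-> P e.

Lemma expr_ext : forall P Q, expr P -> (forall e, P e <-> Q e) -> expr Q.
Proof. intros P Q [f Hf] H. exists f. intro e. rewrite Hf. apply H. Qed.

Lemma expr_eq : forall a b, expr (fun e => teval e a = teval e b).
Proof. intros. exists (FEq a b). simpl. tauto. Qed.
Lemma expr_le : forall a b, expr (fun e => teval e a <= teval e b).
Proof. intros. exists (FLe a b). simpl. tauto. Qed.
Lemma expr_true : expr (fun _ => True).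
Proof. exists (FEq (TNum 0) (TNum 0)). simpl. tauto. Qed.
Lemma expr_not : forall P, expr P -> expr (fun e => ~ P e).
Proof. intros P [f Hf]. exists (FNot f). intro; simpl; rewrite Hf; tauto. Qed.
Lemma expr_and : forall P Q, expr P -> expr Q -> expr (fun e => P e /\ Q e).
Proof. intros P Q [f Hf] [g Hg]. exists (FAnd f g). intro; simpl; rewrite Hf, Hg; tauto. Qed.
Lemma expr_or : forall P Q, expr P -> expr Q -> expr (fun e => P e \/ Q e).
Proof. intros P Q [f Hf] [g Hg]. exists (FOr f g). intro; simpl; rewrite Hf, Hg; tauto. Qed.
Lemma expr_imp : forall P Q, expr P -> expr Q -> expr (fun e => P e -> Q e).
Proof. intros P Q [f Hf] [g Hg]. exists (FImp f g). intro; simpl; rewrite Hf, Hg; tauto. Qed.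
Lemma expr_ex : forall P, expr P -> expr (fun e => exists z, P (scons z e)).
Proof.
  intros P [f Hf]. exists (FEx f). intro; simpl.
  split; intros [z H]; exists z; apply Hf; auto.
Qed.
Lemma expr_all : forall P, expr P -> expr (fun e => forall z, P (scons z e)).
Proof.
  intros P [f Hf]. exists (FAll f). intro; simpl.
  split; intros H z; apply Hf; auto.
Qed.
Lemma expr_ren : forall P r, expr P -> expr (fun e => P (fun j => e (r j))).
Proof.
  intros P r [f Hf]. exists (fren r f). intro. rewrite fsat_ren. apply Hf.
Qed.

Lemma expr_bigand : forall n (P : nat -> env -> Prop),
  (forall i, (i < n)%nat -> expr (P i)) -> expr (fun e => forall i, (i < n)%nat -> P i e).
Proof.
  induction n; intros P H.
  - eapply expr_ext. apply expr_true. intro; split; [intros _ i Hi; lia | auto].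
  - eapply expr_ext. apply (expr_and _ _ (IHn P (fun i Hi => H i ltac:(lia))) (H n ltac:(lia))).
    intro e; split.
    + intros [H1 H2] i Hi. destruct (Nat.eq_dec i n). subst; auto. apply H1; lia.
    + intros H1; split; intros; apply H1; lia.
Qed.

Definition vapp (n : nat) (v : nat -> Z) (e : env) : env :=
  fun j => if (j <? n)%nat then v j else e (j - n)%nat.

Lemma vapp_S1 : forall n v e, vapp (S n) v e = vapp n v (scons (v n) e).
Proof.
  intros. apply functional_extensionality; intro j. unfold vapp, scons.
  destruct (Nat.ltb_spec j (S n)); destruct (Nat.ltb_spec j n); try lia; auto.
  - replace (j - n)%nat with O by lia. f_equal; lia.
  - destruct (j - n)%nat eqn:E. lia. f_equal. lia.
Qed.

Lemma vapp_S2 : forall n v z e,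
  vapp (S n) (fun j => if (j =? n)%nat then z else v j) e = vapp n v (scons z e).
Proof.
  intros. apply functional_extensionality; intro j. unfold vapp, scons.
  destruct (Nat.ltb_spec j (S n)); destruct (Nat.ltb_spec j n); try lia; auto.
  - destruct (Nat.eqb_spec j n); try lia; auto.
  - replace (j - n)%nat with O by lia. destruct (Nat.eqb_spec j n); try lia; auto.
  - destruct (j - n)%nat eqn:E. lia. f_equal. lia.
Qed.

Lemma expr_exv : forall n P, expr P -> expr (fun e => exists v, P (vapp n v e)).
Proof.
  induction n; intros P H.
  - eapply expr_ext. apply H. intro e. unfold vapp. simpl.
    replace (fun j => e (j - 0)%nat) with e.
    2:{ apply functional_extensionality; intro; f_equal; lia. }
    split; [intro; exists (fun _ => 0); auto | intros [_ ?]; auto].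
  - eapply expr_ext. apply expr_ex. apply (IHn P H).
    intro e; simpl. split.
    + intros [z [v Hv]]. exists (fun j => if (j =? n)%nat then z else v j).
      rewrite vapp_S2. auto.
    + intros [v Hv]. exists (v n), v. rewrite <- vapp_S1. auto.
Qed.

Lemma expr_allv : forall n P, expr P -> expr (fun e => forall v, P (vapp n v e)).
Proof.
  induction n; intros P H.
  - eapply expr_ext. apply H. intro e. unfold vapp. simpl.
    replace (fun j => e (j - 0)%nat) with e.
    2:{ apply functional_extensionality; intro; f_equal; lia. }
    split; [intros; auto | intros H1; apply (H1 (fun _ => 0))].
  - eapply expr_ext. apply expr_all. apply (IHn P H).
    intro e; simpl. split.
    + intros H1 v. rewrite vapp_S1. apply H1.
    + intros H1 z v. rewrite <- vapp_S2. apply H1.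
Qed.

Lemma vapp_shift : forall n v e, (fun i => vapp n v e (n + i)%nat) = e.
Proof.
  intros. apply functional_extensionality; intro i. unfold vapp.
  destruct (Nat.ltb_spec (n+i) n). lia. f_equal; lia.
Qed.

Lemma expr_plug : forall n (G : env -> nat -> Z) Q, expr Q ->
  (forall j, (j < n)%nat -> expr (fun e => e O = G (fun i => e (S i)) j)) ->
  expr (fun e => Q (vapp n (G e) e)).
Proof.
  intros n G Q HQ HG.
  eapply expr_ext.
  - apply (expr_exv n (fun E => (forall j, (j < n)%nat -> E j = G (fun i => E (n + i)%nat) j) /\ Q E)).
    apply expr_and; auto. apply expr_bigand. intros j Hj.
    eapply expr_ext. apply (expr_ren _ (fun i => match i with O => j | S i' => (n + i')%nat end) (HG j Hj)).
    intro; simpl; tauto.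
  - intro e. split.
    + intros [v [H1 H2]]. rewrite vapp_shift in H1.
      replace (vapp n (G e) e) with (vapp n v e); auto.
      apply functional_extensionality; intro j. unfold vapp.
      destruct (Nat.ltb_spec j n); auto. specialize (H1 j H). unfold vapp in H1.
      destruct (Nat.ltb_spec j n); try lia.
    + intros H. exists (G e). split; auto. intros j Hj. rewrite vapp_shift. unfold vapp.
      destruct (Nat.ltb_spec j n); try lia.
Qed.
Local Open Scope nat_scope.


Fixpoint noV (i : nat) (a : aexp) : Prop :=
  match a with
  | AVar j => j <> i
  | ANum _ | ALoc _ => True
  | APlus a b | AMinus a b | AMult a b => noV i a /\ noV i b
  end.

Lemma aeval_upd_noV : forall a i I s z, noV i a ->
  aeval (upd_interp I i z) s a = aeval I s a.
Proof.
  induction a; intros; simpl in *; try tauto;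
    try (rewrite IHa1, IHa2; tauto).
  unfold upd_interp. match goal with |- (if Nat.eqb ?a ?b then _ else _) = _ => destruct (Nat.eqb_spec a b) end; congruence.
Qed.

Fixpoint ttr (rho : nat -> aexp) (t : tm) : aexp :=
  match t with
  | TVar n => rho n | TNum z => ANum z
  | TAdd a b => APlus (ttr rho a) (ttr rho b)
  | TSub a b => AMinus (ttr rho a) (ttr rho b)
  | TMul a b => AMult (ttr rho a) (ttr rho b)
  end.

Fixpoint ftr (rho : nat -> aexp) (nx : nat) (f : fm) : assn :=
  match f with
  | FEq a b => AEq (ttr rho a) (ttr rho b)
  | FLe a b => ALe (ttr rho a) (ttr rho b)
  | FNot f => ANot (ftr rho nx f)
  | FAnd f g => AAnd (ftr rho nx f) (ftr rho nx g)
  | FOr f g => AOr (ftr rho nx f) (ftr rho nx g)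
  | FImp f g => AImp (ftr rho nx f) (ftr rho nx g)
  | FEx f => AExists nx (ftr (scons (AVar nx) rho) (S nx) f)
  | FAll f => AForall nx (ftr (scons (AVar nx) rho) (S nx) f)
  end.

Lemma ttr_ok : forall t rho I s e, (forall j, aeval I s (rho j) = e j) ->
  aeval I s (ttr rho t) = teval e t.
Proof. induction t; intros; simpl; auto; rewrite IHt1 with (e:=e), IHt2 with (e:=e); auto. Qed.

Lemma ftr_ok : forall f rho nx I s e,
  (forall j, aeval I s (rho j) = e j) ->
  (forall j i, (nx <= i)%nat -> noV i (rho j)) ->
  (sat I s (ftr rho nx f) <-> fsat e f).
Proof.
  induction f; intros rho nx I s e H1 H2; simpl;
    try (rewrite !(ttr_ok _ rho I s e H1); tauto);
    try (rewrite (IHf1 rho nx I s e H1 H2), (IHf2 rho nx I s e H1 H2); tauto).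
  - rewrite (IHf rho nx I s e H1 H2); tauto.
  - assert (K : forall z, sat (upd_interp I nx z) s (ftr (scons (AVar nx) rho) (S nx) f) <-> fsat (scons z e) f).
    { intro z. apply IHf.
      - intros [|j]; simpl. unfold upd_interp. rewrite Nat.eqb_refl. auto.
        rewrite aeval_upd_noV. auto. apply H2. lia.
      - intros [|j] i Hi; simpl. lia. apply H2. lia. }
    split; intros [z Hz]; exists z; apply K; auto.
  - assert (K : forall z, sat (upd_interp I nx z) s (ftr (scons (AVar nx) rho) (S nx) f) <-> fsat (scons z e) f).
    { intro z. apply IHf.
      - intros [|j]; simpl. unfold upd_interp. rewrite Nat.eqb_refl. auto.
        rewrite aeval_upd_noV. auto. apply H2. lia.
      - intros [|j] i Hi; simpl. lia. apply H2. lia. }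
    split; intros Hz z; apply K; auto.
Qed.

Fixpoint asub (sg : Loc -> aexp) (a : aexp) : aexp :=
  match a with
  | ALoc X => sg X | ANum n => ANum n | AVar i => AVar i
  | APlus a b => APlus (asub sg a) (asub sg b)
  | AMinus a b => AMinus (asub sg a) (asub sg b)
  | AMult a b => AMult (asub sg a) (asub sg b)
  end.

Fixpoint bsub (sg : Loc -> aexp) (B : assn) : assn :=
  match B with
  | ATrue => ATrue | AFalse => AFalse
  | AEq a b => AEq (asub sg a) (asub sg b)
  | ALe a b => ALe (asub sg a) (asub sg b)
  | ANot A => ANot (bsub sg A)
  | AAnd A C => AAnd (bsub sg A) (bsub sg C)
  | AOr A C => AOr (bsub sg A) (bsub sg C)
  | AImp A C => AImp (bsub sg A) (bsub sg C)
  | AForall i A => AForall i (bsub sg A)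
  | AExists i A => AExists i (bsub sg A)
  end.

Fixpoint avlt (M : nat) (a : aexp) : Prop :=
  match a with
  | AVar j => (j < M)%nat
  | ANum _ | ALoc _ => True
  | APlus a b | AMinus a b | AMult a b => avlt M a /\ avlt M b
  end.

Fixpoint vlt (M : nat) (B : assn) : Prop :=
  match B with
  | ATrue | AFalse => True
  | AEq a b | ALe a b => avlt M a /\ avlt M b
  | ANot A => vlt M A
  | AAnd A C | AOr A C | AImp A C => vlt M A /\ vlt M C
  | AForall i A | AExists i A => (i < M)%nat /\ vlt M A
  end.

Lemma avlt_mono : forall a M M', avlt M a -> (M <= M')%nat -> avlt M' a.
Proof. induction a; simpl; intros; intuition (eauto; lia). Qed.
Lemma vlt_mono : forall B M M', vlt M B -> (M <= M')%nat -> vlt M' B.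
Proof. induction B; simpl; intros; intuition (eauto using avlt_mono; lia). Qed.
Lemma avlt_ex : forall a, exists M, avlt M a.
Proof.
  induction a; simpl; try (exists O; exact I).
  all: try (match goal with |- exists M, (?n < M)%nat => exists (S n); lia end).
  all: destruct IHa1 as [M1 H1], IHa2 as [M2 H2]; exists (Nat.max M1 M2);
    split; eapply avlt_mono; eauto; lia.
Qed.
Lemma vlt_ex : forall B, exists M, vlt M B.
Proof.
  induction B; simpl; try (exists O; exact I).
  all: try (destruct (avlt_ex a) as [M1 H1], (avlt_ex a0) as [M2 H2]; exists (Nat.max M1 M2);
    split; eapply avlt_mono; eauto; lia).
  all: try (destruct IHB1 as [M1 H1], IHB2 as [M2 H2]; exists (Nat.max M1 M2);
    split; eapply vlt_mono; eauto; lia).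
  all: try (destruct IHB as [M H]; exists M; exact H).
  all: destruct IHB as [M H]; match goal with |- exists M, (?i < M)%nat /\ _ => 
    exists (Nat.max M (S i)); split; [lia| eapply vlt_mono; eauto; lia] end.
Qed.

Lemma aeval_asub : forall a I s sg,
  aeval I s (asub sg a) = aeval I (fun X => aeval I s (sg X)) a.
Proof. induction a; intros; simpl; auto; rewrite IHa1, IHa2; auto. Qed.

Lemma aeval_agree : forall a M I I' s, avlt M a -> (forall i, (i < M)%nat -> I i = I' i) ->
  aeval I s a = aeval I' s a.
Proof. induction a; intros; simpl in *; auto; try (erewrite IHa1, IHa2; eauto; tauto). Qed.

Lemma sat_bsub : forall B M I s sg, vlt M B ->
  (forall X i, (i < M)%nat -> noV i (sg X)) ->
  (sat I s (bsub sg B) <-> sat I (fun X => aeval I s (sg X)) B).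
Proof.
  induction B; intros M I s sg HB Hsg; simpl in *; rewrite ?aeval_asub; try tauto;
    try (rewrite (IHB1 M I s sg), (IHB2 M I s sg); tauto).
  - rewrite (IHB M I s sg); tauto.
  - assert (K : forall n, (fun X => aeval (upd_interp I i n) s (sg X)) = (fun X => aeval I s (sg X))).
    { intro n. apply functional_extensionality; intro X. apply aeval_upd_noV. apply Hsg. tauto. }
    split; intros H n; specialize (H n); [rewrite (IHB M) in H | rewrite (IHB M)]; rewrite ?K in *; tauto.
  - assert (K : forall n, (fun X => aeval (upd_interp I i n) s (sg X)) = (fun X => aeval I s (sg X))).
    { intro n. apply functional_extensionality; intro X. apply aeval_upd_noV. apply Hsg. tauto. }
    split; intros [n H]; exists n; [rewrite (IHB M) in H | rewrite (IHB M)]; rewrite ?K in *; tauto.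
Qed.

Lemma sat_agree : forall B M I I' s, vlt M B -> (forall i, (i < M)%nat -> I i = I' i) ->
  (sat I s B <-> sat I' s B).
Proof.
  induction B; intros M I I' s HB H; simpl in *; try tauto;
    try (rewrite !(aeval_agree _ M I I' s) by tauto; tauto);
    try (rewrite (IHB1 M I I' s), (IHB2 M I I' s) by tauto; tauto).
  - rewrite (IHB M I I' s) by tauto; tauto.
  - assert (K : forall n, sat (upd_interp I i n) s B <-> sat (upd_interp I' i n) s B).
    { intro n. apply (IHB M). tauto. intros j Hj. unfold upd_interp. destruct (j =? i)%nat; auto. }
    split; intros H1 n; apply K; auto.
  - assert (K : forall n, sat (upd_interp I i n) s B <-> sat (upd_interp I' i n) s B).
    { intro n. apply (IHB M). tauto. intros j Hj. unfold upd_interp. destruct (j =? i)%nat; auto. }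
    split; intros [n H1]; exists n; apply K; auto.
Qed.

Definition updN (I : interp) (M N : nat) (v : nat -> Z) : interp :=
  fun i => if andb (M <=? i)%nat (i <? M + N)%nat then v (i - M)%nat else I i.

Fixpoint forallN (M N : nat) (A : assn) : assn :=
  match N with O => A | S n => forallN M n (AForall (M + n)%nat A) end.

Lemma sat_forallN : forall N M A I s,
  sat I s (forallN M N A) <-> forall v, sat (updN I M N v) s A.
Proof.
  induction N; intros; simpl.
  - assert (E : forall v, updN I M 0 v = I).
    { intro v; apply functional_extensionality; intro i; unfold updN.
      destruct (Nat.leb_spec M i), (Nat.ltb_spec i (M + 0)); simpl; auto; lia. }
    split; intros H; [intro v; rewrite E; auto | specialize (H (fun _ => 0%Z)); rewrite E in H; auto].
  - rewrite IHN. simpl. split.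
    + intros H v. specialize (H v (v N)).
      replace (updN I M (S N) v) with (upd_interp (updN I M N v) (M + N) (v N)); auto.
      apply functional_extensionality; intro i; unfold updN, upd_interp.
      destruct (Nat.eqb_spec i (M+N)), (Nat.leb_spec M i), (Nat.ltb_spec i (M + N)),
        (Nat.ltb_spec i (M + S N)); simpl; auto; try lia. subst. f_equal; lia.
    + intros H v z. specialize (H (fun j => if (j =? N)%nat then z else v j)).
      match goal with H : sat ?J _ _ |- sat ?K _ _ => replace K with J; auto end.
      apply functional_extensionality; intro i; unfold updN, upd_interp.
      destruct (Nat.eqb_spec i (M+N)), (Nat.leb_spec M i), (Nat.ltb_spec i (M + N)),
        (Nat.ltb_spec i (M + S N)); simpl; auto; try lia.
      subst. replace (M + N - M)%nat with N by lia. rewrite Nat.eqb_refl. auto.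
      destruct (Nat.eqb_spec (i - M) N); auto; lia.
Qed.

Fixpoint aok (N : nat) (a : caexp) : Prop :=
  match a with
  | CLoc X => X < N | CNum _ => True
  | CPlus a b | CMinus a b | CMult a b => aok N a /\ aok N b
  end.
Fixpoint bok (N : nat) (b : cbexp) : Prop :=
  match b with
  | CTrue | CFalse => True
  | CEq a b | CLe a b => aok N a /\ aok N b
  | CNot b => bok N b
  | CAnd b1 b2 | COr b1 b2 => bok N b1 /\ bok N b2
  end.
Fixpoint cok (N : nat) (c : com) : Prop :=
  match c with
  | Skip => True
  | Assign X a => X < N /\ aok N a
  | Seq c0 c1 | Par c0 c1 => cok N c0 /\ cok N c1
  | If b c0 c1 => bok N b /\ cok N c0 /\ cok N c1
  | While b c => bok N b /\ cok N c
  end.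

Lemma aok_mono : forall a N N', aok N a -> N <= N' -> aok N' a.
Proof. induction a; simpl; intros; intuition (eauto; lia). Qed.
Lemma bok_mono : forall b N N', bok N b -> N <= N' -> bok N' b.
Proof. induction b; simpl; intros; intuition (eauto using aok_mono; lia). Qed.
Lemma cok_mono : forall c N N', cok N c -> N <= N' -> cok N' c.
Proof. induction c; simpl; intros; intuition (eauto using aok_mono, bok_mono; lia). Qed.
Lemma aok_ex : forall a, exists N, aok N a.
Proof.
  induction a; simpl; try (exists O; exact I).
  all: try (match goal with |- exists N, ?n < N => exists (S n); lia end).
  all: destruct IHa1 as [M1 H1], IHa2 as [M2 H2]; exists (Nat.max M1 M2);
    split; eapply aok_mono; eauto; lia.
Qed.
Lemma bok_ex : forall b, exists N, bok N b.
Proof.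
  induction b; simpl; try (exists O; exact I); auto.
  all: try (match goal with |- exists N, aok N ?c /\ aok N ?c0 =>
    destruct (aok_ex c) as [M1 H1], (aok_ex c0) as [M2 H2]; exists (Nat.max M1 M2);
    split; eapply aok_mono; eauto; lia end).
  all: destruct IHb1 as [M1 H1], IHb2 as [M2 H2]; exists (Nat.max M1 M2);
    split; eapply bok_mono; eauto; lia.
Qed.
Lemma cok_ex : forall c, exists N, cok N c.
Proof.
  induction c as [| l a | c1 IHc1 c2 IHc2 | b c1 IHc1 c2 IHc2 | b c IHc | c1 IHc1 c2 IHc2]; simpl; try (exists O; exact I).
  - destruct (aok_ex a) as [M H]. exists (Nat.max M (S l)). split. lia. eapply aok_mono; eauto; lia.
  - destruct IHc1 as [M1 H1], IHc2 as [M2 H2]; exists (Nat.max M1 M2);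
    split; eapply cok_mono; eauto; lia.
  - destruct (bok_ex b) as [M0 H0], IHc1 as [M1 H1], IHc2 as [M2 H2];
    exists (Nat.max M0 (Nat.max M1 M2)).
    split. eapply bok_mono; eauto; lia. split; eapply cok_mono; eauto; lia.
  - destruct (bok_ex b) as [M0 H0], IHc as [M1 H1]; exists (Nat.max M0 M1).
    split. eapply bok_mono; eauto; lia. eapply cok_mono; eauto; lia.
  - destruct IHc1 as [M1 H1], IHc2 as [M2 H2]; exists (Nat.max M1 M2);
    split; eapply cok_mono; eauto; lia.
Qed.

Lemma caeval_agree : forall a N t s, aok N a -> (forall X, X < N -> t X = s X) ->
  caeval t a = caeval s a.
Proof. induction a; simpl; intros; auto; try (erewrite IHa1, IHa2; eauto; tauto). Qed.
Lemma cbeval_agree : forall b N t s, bok N b -> (forall X, X < N -> t X = s X) ->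
  cbeval t b = cbeval s b.
Proof.
  induction b; simpl; intros; auto;
  try (erewrite !(caeval_agree _ N t s) by tauto; auto);
  try (erewrite IHb1, IHb2; eauto; tauto).
  erewrite IHb; eauto.
Qed.

Definition merge (N : nat) (t s : state) : state := fun X => if X <? N then s X else t X.

Lemma merge_merge : forall N t a b, merge N (merge N t a) b = merge N t b.
Proof. intros. apply functional_extensionality; intro X. unfold merge. destruct (X <? N); auto. Qed.
Lemma merge_self : forall N t s, (forall X, X < N -> t X = s X) -> merge N t s = t.
Proof.
  intros. apply functional_extensionality; intro X. unfold merge.
  destruct (Nat.ltb_spec X N); auto. symmetry; auto.
Qed.

Lemma exec_out : forall c s s', exec c s s' -> forall N, cok N c -> forall X, N <= X -> s' X = s X.
Proof.
  induction 1; simpl; intros N Hc Y HY; auto.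
  - unfold upd_state. destruct (Nat.eqb_spec Y X); auto; lia.
  - destruct Hc. rewrite (IHexec2 N), (IHexec1 N); auto.
  - destruct Hc as [? [? ?]]. apply (IHexec N); auto.
  - destruct Hc as [? [? ?]]. apply (IHexec N); auto.
  - rewrite (IHexec2 N), (IHexec1 N); simpl; tauto.
  - destruct Hc. rewrite (IHexec2 N), (IHexec1 N); auto.
Qed.

Lemma exec_frame : forall c s s', exec c s s' -> forall N, cok N c ->
  forall t, (forall X, X < N -> t X = s X) -> exec c t (merge N t s').
Proof.
  induction 1; simpl; intros N Hc t Ht.
  - rewrite merge_self; auto. constructor.
  - destruct Hc as [HX Ha].
    replace (merge N t (upd_state s X (caeval s a))) with (upd_state t X (caeval t a)).
    constructor. apply functional_extensionality; intro Y. unfold merge, upd_state.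
    destruct (Nat.ltb_spec Y N), (Nat.eqb_spec Y X); auto.
    erewrite caeval_agree; eauto. lia.
  - destruct Hc. apply E_Seq with (merge N t s''). apply IHexec1; auto.
    rewrite <- (merge_merge N t s'' s'). apply IHexec2; auto.
    intros X HX; unfold merge. destruct (Nat.ltb_spec X N); auto; lia.
  - destruct Hc as [Hb [H1 H2]]. apply E_IfTrue. erewrite cbeval_agree; eauto. auto.
  - destruct Hc as [Hb [H1 H2]]. apply E_IfFalse. erewrite cbeval_agree; eauto. auto.
  - rewrite merge_self; auto. apply E_WhileFalse. erewrite cbeval_agree; eauto. tauto.
  - destruct Hc as [Hb Hc]. apply E_WhileTrue with (merge N t s''). erewrite cbeval_agree; eauto.
    apply IHexec1; auto.
    rewrite <- (merge_merge N t s'' s'). apply IHexec2; simpl; auto.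
    intros X HX; unfold merge. destruct (Nat.ltb_spec X N); auto; lia.
  - destruct Hc. apply E_Par with (merge N t s'') (merge N t s''').
    apply IHexec1; auto.
    rewrite <- (merge_merge N t s'' s'). apply IHexec2; auto.
    intros X HX; unfold merge. destruct (Nat.ltb_spec X N); auto; lia.
    apply IHexec3; auto.
    rewrite <- (merge_merge N t s''' s'). apply IHexec4; auto.
    intros X HX; unfold merge. destruct (Nat.ltb_spec X N); auto; lia.
Qed.

Definition st (N : nat) (e : env) (base : nat) : state :=
  fun X => if X <? N then e (base + X) else 0%Z.

Lemma exec_cut_iff : forall N c s s', cok N c ->
  (exec c s s' <-> (forall X, N <= X -> s' X = s X) /\ exec c (st N s 0) (st N s' 0)).
Proof.
  intros N c s s' Hc. split.
  - intros H. split. intros; eapply exec_out; eauto.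
    replace (st N s' 0) with (merge N (st N s 0) s').
    apply exec_frame with s; auto. intros X HX; unfold st. destruct (Nat.ltb_spec X N); auto; lia.
    apply functional_extensionality; intro X; unfold merge, st. destruct (X <? N); auto.
  - intros [H1 H2]. replace s' with (merge N s (st N s' 0)).
    apply exec_frame with (st N s 0); auto. intros X HX; unfold st. destruct (Nat.ltb_spec X N); auto; lia.
    apply functional_extensionality; intro X; unfold merge, st. destruct (Nat.ltb_spec X N); auto.
    symmetry; apply H1; lia.
Qed.

Definition Rep (N : nat) (R : state -> state -> Prop) :=
  expr (fun e => R (st N e 0) (st N e N)).

Fixpoint ctm (a : caexp) : tm :=
  match a with
  | CNum z => TNum z | CLoc X => TVar X
  | CPlus a b => TAdd (ctm a) (ctm b)
  | CMinus a b => TSub (ctm a) (ctm b)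
  | CMult a b => TMul (ctm a) (ctm b)
  end.

Lemma caeval_st : forall a N e, aok N a -> caeval (st N e 0) a = teval e (ctm a).
Proof.
  induction a; simpl; intros; auto; try (rewrite IHa1, IHa2; tauto).
  unfold st. destruct (Nat.ltb_spec l N); auto; lia.
Qed.

Fixpoint bfm (b : cbexp) : fm :=
  match b with
  | CTrue => FEq (TNum 0) (TNum 0)
  | CFalse => FNot (FEq (TNum 0) (TNum 0))
  | CEq a1 a2 => FEq (ctm a1) (ctm a2)
  | CLe a1 a2 => FLe (ctm a1) (ctm a2)
  | CNot b => FNot (bfm b)
  | CAnd b1 b2 => FAnd (bfm b1) (bfm b2)
  | COr b1 b2 => FOr (bfm b1) (bfm b2)
  end.

Lemma bfm_ok : forall b N e, bok N b -> (fsat e (bfm b) <-> cbeval (st N e 0) b = true).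
Proof.
  induction b; simpl; intros N e Hb.
  - tauto.
  - split; [intro H; exfalso; apply H; auto | discriminate].
  - rewrite !(caeval_st _ N) by tauto. rewrite Z.eqb_eq. tauto.
  - rewrite !(caeval_st _ N) by tauto. rewrite Z.leb_le. tauto.
  - rewrite (IHb N) by auto. destruct (cbeval (st N e 0) b); simpl; split; auto; congruence.
  - rewrite (IHb1 N), (IHb2 N) by tauto. rewrite Bool.andb_true_iff. tauto.
  - rewrite (IHb1 N), (IHb2 N) by tauto. rewrite Bool.orb_true_iff. tauto.
Qed.

Lemma expr_cb : forall N b, bok N b -> expr (fun e => cbeval (st N e 0) b = true).
Proof. intros. exists (bfm b). intro. apply bfm_ok; auto. Qed.

Lemma st_ext : forall N e b e' b', (forall X, X < N -> e (b + X) = e' (b' + X)) ->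
  st N e b = st N e' b'.
Proof.
  intros. apply functional_extensionality; intro X; unfold st.
  destruct (Nat.ltb_spec X N); auto.
Qed.

Lemma st_eq_iff : forall N e b e' b',
  st N e b = st N e' b' <-> (forall X, X < N -> e (b + X) = e' (b' + X)).
Proof.
  split; [|apply st_ext]. intros H X HX. apply (f_equal (fun f => f X)) in H.
  unfold st in H. destruct (Nat.ltb_spec X N); auto; lia.
Qed.

Lemma rep_skip : forall N, Rep N (exec Skip).
Proof.
  intro N. eapply expr_ext.
  apply (expr_bigand N (fun X e => teval e (TVar X) = teval e (TVar (N + X)))).
  intros; apply expr_eq.
  intro e; simpl. split.
  - intros H. replace (st N e N) with (st N e 0). constructor. apply st_ext. auto.
  - intros H. assert (Hs : st N e 0 = st N e N) by (inversion H; auto).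
    rewrite st_eq_iff in Hs. intros X HX. apply Hs; auto.
Qed.

Lemma rep_assign : forall N X a, X < N -> aok N a -> Rep N (exec (Assign X a)).
Proof.
  intros N X a HX Ha. eapply expr_ext.
  apply (expr_bigand N (fun Y e => e (N + Y) = if Y =? X then teval e (ctm a) else e Y)).
  { intros Y HY. destruct (Y =? X).
    apply (expr_eq (TVar (N + Y)) (ctm a)). apply (expr_eq (TVar (N + Y)) (TVar Y)). }
  intro e. split.
  - intros H. replace (st N e N) with (upd_state (st N e 0) X (caeval (st N e 0) a)). constructor.
    rewrite (caeval_st _ N) by auto.
    apply functional_extensionality; intro Y; unfold upd_state, st.
    destruct (Nat.ltb_spec Y N); destruct (Nat.eqb_spec Y X); subst; try lia.
    + rewrite H by lia. rewrite Nat.eqb_refl. auto.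
    + rewrite H by lia. rewrite <- Nat.eqb_neq in n. rewrite n. auto.
  - intros H. inversion H; subst. intros Y HY.
    rewrite (caeval_st _ N) in H4 by auto.
    apply (f_equal (fun f => f Y)) in H4. unfold upd_state, st in H4.
    destruct (Nat.ltb_spec Y N); try lia. destruct (Nat.eqb_spec Y X); auto.
Qed.

Lemma rep_seq : forall N R0 R1, Rep N R0 -> Rep N R1 ->
  expr (fun e => exists v, R0 (st N e 0) (st N v 0) /\ R1 (st N v 0) (st N e N)).
Proof.
  intros N R0 R1 H0 H1.
  set (r0 := fun j => if j <? N then N + j else j - N).
  set (r1 := fun j => if j <? N then j else N + j).
  eapply expr_ext.
  apply (expr_exv N _ (expr_and _ _ (expr_ren _ r0 H0) (expr_ren _ r1 H1))).
  intro e; simpl.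
  assert (K : forall v, st N (fun j => vapp N v e (r0 j)) 0 = st N e 0 /\
                   st N (fun j => vapp N v e (r0 j)) N = st N v 0 /\
                   st N (fun j => vapp N v e (r1 j)) 0 = st N v 0 /\
                   st N (fun j => vapp N v e (r1 j)) N = st N e N).
  { intro v. repeat split; apply st_ext; intros X HX; unfold r0, r1, vapp;
    repeat (match goal with |- context [?a <? ?b] => destruct (Nat.ltb_spec a b) end);
    try lia; f_equal; lia. }
  split; intros [v Hv]; exists v; destruct (K v) as [K1 [K2 [K3 K4]]];
    rewrite ?K1, ?K2, ?K3, ?K4 in *; auto.
Qed.

Lemma st_cut : forall N s, (forall X, N <= X -> s X = 0%Z) -> st N s 0 = s.
Proof.
  intros. apply functional_extensionality; intro X; unfold st.
  destruct (Nat.ltb_spec X N); auto. symmetry; auto.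
Qed.

Lemma seq_char : forall N c0 c1 e s', cok N c0 ->
  (exec (Seq c0 c1) (st N e 0) s' <->
   exists v, exec c0 (st N e 0) (st N v 0) /\ exec c1 (st N v 0) s').
Proof.
  intros N c0 c1 e s' Hc. split.
  - intros H. inversion H as [| | ? ? ? s'' ? H3 H4 | | | | |]; subst. exists s''.
    assert (E : st N s'' 0 = s'').
    { apply st_cut. intros X HX. rewrite (exec_out _ _ _ H3 N Hc X HX).
      unfold st. destruct (Nat.ltb_spec X N); auto; lia. }
    rewrite E. auto.
  - intros [v [H1 H2]]. econstructor; eauto.
Qed.

Lemma par_char : forall c0 c1 s s',
  exec (Par c0 c1) s s' <-> exec (Seq c0 c1) s s' /\ exec (Seq c1 c0) s s'.
Proof.
  split.
  - intros H; inversion H; subst. split; econstructor; eauto.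
  - intros [H1 H2]. inversion H1; inversion H2; subst. econstructor; eauto.
Qed.

Lemma if_char : forall b c0 c1 s s',
  exec (If b c0 c1) s s' <-> (cbeval s b = true /\ exec c0 s s') \/ (cbeval s b = false /\ exec c1 s s').
Proof.
  split.
  - intros H; inversion H; subst; auto.
  - intros [[H1 H2]|[H1 H2]]; [apply E_IfTrue | apply E_IfFalse]; auto.
Qed.

Lemma rep_seqc : forall N c0 c1, cok N c0 -> Rep N (exec c0) -> Rep N (exec c1) ->
  Rep N (exec (Seq c0 c1)).
Proof.
  intros. eapply expr_ext. apply (rep_seq N _ _ H0 H1).
  intro e. rewrite seq_char; auto. tauto.
Qed.
Local Open Scope Z_scope.

Lemma fact_div : forall n d, (1 <= d <= n)%nat -> (Z.of_nat d | Z.of_nat (fact n)).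
Proof.
  induction n; intros d Hd. lia.
  simpl fact. rewrite Nat2Z.inj_add, Nat2Z.inj_mul.
  replace (Z.of_nat (fact n) + Z.of_nat n * Z.of_nat (fact n)) with (Z.of_nat (S n) * Z.of_nat (fact n)) by lia.
  destruct (Nat.eq_dec d (S n)). subst. apply Z.divide_mul_l. apply Z.divide_refl.
  apply Z.divide_mul_r. apply IHn. lia.
Qed.

Fixpoint prodd (d : nat -> Z) (k : nat) : Z :=
  match k with O => 1 | S k' => d k' * prodd d k' end.

Lemma prodd_div : forall d k i, (i < k)%nat -> (d i | prodd d k).
Proof.
  induction k; intros i Hi. lia. simpl.
  destruct (Nat.eq_dec i k). subst. apply Z.divide_mul_l, Z.divide_refl.
  apply Z.divide_mul_r. apply IHk. lia.
Qed.

Lemma prodd_rel : forall d k, (forall i, (i < k)%nat -> rel_prime (d i) (d k)) ->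
  rel_prime (prodd d k) (d k).
Proof.
  intros d k H. apply rel_prime_sym.
  assert (G : forall k', (k' <= k)%nat -> rel_prime (d k) (prodd d k')).
  { induction k'; intros Hk; simpl. apply rel_prime_sym, rel_prime_1.
    apply rel_prime_mult. apply rel_prime_sym, H; lia. apply IHk'; lia. }
  apply G; lia.
Qed.

Lemma crt : forall (d f : nat -> Z) m,
  (forall i j, (i < j < m)%nat -> rel_prime (d i) (d j)) ->
  (forall i, (i < m)%nat -> 0 <= f i < d i) ->
  exists a, forall i, (i < m)%nat -> a mod d i = f i.
Proof.
  intros d f m Hrp Hf.
  assert (G : forall k, (k <= m)%nat -> exists a, forall i, (i < k)%nat -> a mod d i = f i).
  { induction k; intros Hk. exists 0; intros; lia.
    destruct IHk as [a Ha]. lia.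
    assert (Hr : rel_prime (prodd d k) (d k)).
    { apply prodd_rel. intros; apply Hrp; lia. }
    destruct (rel_prime_bezout _ _ Hr) as [u v Huv].
    exists (a + prodd d k * u * (f k - a)).
    intros i Hi.
    assert (Hdi : 0 < d i) by (specialize (Hf i ltac:(lia)); lia).
    destruct (Nat.eq_dec i k).
    - subst i.
      replace (a + prodd d k * u * (f k - a)) with (f k + (-(v * (f k - a))) * d k).
      rewrite Z.mod_add by lia. apply Z.mod_small. apply Hf; lia.
      replace (prodd d k * u) with (1 - v * d k) by lia. ring.
    - destruct (prodd_div d k i ltac:(lia)) as [q Hq].
      rewrite Hq. replace (a + q * d i * u * (f k - a)) with (a + (q * u * (f k - a)) * d i) by ring.
      rewrite Z.mod_add by lia. apply Ha; lia. }
  apply G; lia.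
Qed.

Lemma beta : forall m (f : nat -> Z) K, (forall j, (j < m)%nat -> 0 <= f j <= K) ->
  exists a b, 0 <= b /\ forall j, (j < m)%nat -> a mod (1 + (Z.of_nat j + 1) * b) = f j.
Proof.
  intros m f K Hf.
  set (b := Z.of_nat (fact m) * (Z.max K 0 + 1)).
  assert (Hfact : 1 <= Z.of_nat (fact m)) by (pose proof (lt_O_fact m); lia).
  assert (Hb : Z.max K 0 + 1 <= b) by (unfold b; nia).
  destruct (crt (fun j => 1 + (Z.of_nat j + 1) * b) f m) as [a Ha].
  - intros i j Hij. constructor; try apply Z.divide_1_l.
    intros x Hxi Hxj.
    assert (Hx1 : (x | Z.of_nat (j - i))).
    { replace (Z.of_nat (j - i)) with ((Z.of_nat j + 1) * (1 + (Z.of_nat i + 1) * b) - (Z.of_nat i + 1) * (1 + (Z.of_nat j + 1) * b)) by (rewrite Nat2Z.inj_sub by lia; ring).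
      apply Z.divide_sub_r; apply Z.divide_mul_r; auto. }
    assert (Hx2 : (x | b)).
    { apply Z.divide_trans with (Z.of_nat (j - i)); auto. unfold b. apply Z.divide_mul_l. apply fact_div. lia. }
    replace 1 with ((1 + (Z.of_nat i + 1) * b) - (Z.of_nat i + 1) * b) by ring.
    apply Z.divide_sub_r; auto. apply Z.divide_mul_r; auto.
  - intros i Hi. specialize (Hf i Hi). nia.
  - exists a, b. split. lia. exact Ha.
Qed.

Lemma while_iter : forall b c s s', exec (While b c) s s' <->
  exists k (sq : nat -> state), sq O = s /\ sq k = s' /\
    (forall t, (t < k)%nat -> cbeval (sq t) b = true /\ exec c (sq t) (sq (S t))) /\
    cbeval (sq k) b = false.
Proof.
  intros b c s s'. split.
  - intros H. remember (While b c) as w eqn:Hw.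
    induction H; inversion Hw; subst.
    + exists O, (fun _ => s). repeat split; auto; intros; lia.
    + destruct (IHexec2 eq_refl) as [k [sq [K1 [K2 [K3 K4]]]]].
      exists (S k), (fun t => match t with O => s | S t' => sq t' end).
      repeat split; auto.
      all: match goal with t : nat |- _ => destruct t as [|u]; [subst; auto | apply K3; lia] end.
  - intros [k [sq [H1 [H2 [H3 H4]]]]]. subst.
    revert sq H3 H4. induction k; intros sq H3 H4.
    + apply E_WhileFalse; auto.
    + apply E_WhileTrue with (sq (S O)). apply H3; lia. apply H3; lia.
      apply (IHk (fun t => sq (S t))); auto. intros t Ht; apply H3; lia.
Qed.

Definition Zm (a d : Z) : Z := if 0 <? d then a mod d else 0.

Definition Tv (N : nat) (a bb t : Z) : nat -> Z := fun X =>
  Zm a (1 + (2 * (t * Z.of_nat N + Z.of_nat X) + 1) * bb)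
  - Zm a (1 + (2 * (t * Z.of_nat N + Z.of_nat X) + 2) * bb).

Definition lift (t : tm) : tm := tren S t.
Lemma teval_lift : forall z e t, teval (scons z e) (lift t) = teval e t.
Proof. intros. unfold lift. rewrite teval_ren. reflexivity. Qed.

Definition modf (ta td tr : tm) : fm :=
  FOr (FAnd (FLe (TNum 1) td)
            (FEx (FAnd (FEq (lift ta) (TAdd (TMul (TVar 0) (lift td)) (lift tr)))
                       (FAnd (FLe (TNum 0) (lift tr)) (FLe (TAdd (lift tr) (TNum 1)) (lift td))))))
      (FAnd (FLe td (TNum 0)) (FEq tr (TNum 0))).

Lemma modf_ok : forall e ta td tr,
  fsat e (modf ta td tr) <-> teval e tr = Zm (teval e ta) (teval e td).
Proof.
  intros. unfold modf, Zm. simpl. setoid_rewrite teval_lift.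
  set (a := teval e ta). set (d := teval e td). set (r := teval e tr).
  destruct (Z.ltb_spec 0 d).
  - split.
    + intros [[_ [q [H1 [H2 H3]]]] | [H1 H2]]; [| lia].
      apply Z.mod_unique with q. lia. simpl in *. lia.
    + intros H1. left. split. lia. exists (a / d). simpl.
      pose proof (Z.div_mod a d ltac:(lia)). pose proof (Z.mod_pos_bound a d H). subst r. lia.
  - split. intros [[H1 _]|[_ H1]]; auto; lia. intros; right; lia.
Qed.

Definition dterm (N : nat) (tb tt : tm) (X : nat) (k : Z) : tm :=
  TAdd (TNum 1) (TMul (TAdd (TMul (TNum 2) (TAdd (TMul tt (TNum (Z.of_nat N))) (TNum (Z.of_nat X)))) (TNum k)) tb).

Definition Tdf (N : nat) (ta tb tt : tm) (X : nat) (tr : tm) : fm :=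
  FEx (FEx (FAnd (modf (lift (lift ta)) (lift (lift (dterm N tb tt X 1))) (TVar 1))
           (FAnd (modf (lift (lift ta)) (lift (lift (dterm N tb tt X 2))) (TVar 0))
                 (FEq (lift (lift tr)) (TSub (TVar 1) (TVar 0)))))).

Lemma Tdf_ok : forall N e ta tb tt X tr,
  fsat e (Tdf N ta tb tt X tr) <-> teval e tr = Tv N (teval e ta) (teval e tb) (teval e tt) X.
Proof.
  intros. unfold Tdf, Tv. cbn [fsat]. setoid_rewrite modf_ok. repeat setoid_rewrite teval_lift. unfold dterm. cbn [teval].
  split.
  - intros [r1 [r2 [H1 [H2 H3]]]]. rewrite H3, H1, H2. reflexivity.
  - intros H. eexists. eexists. split. reflexivity. split. reflexivity. exact H.
Qed.

Lemma expr_Tv : forall N ta tb tt X tr,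
  expr (fun e => teval e tr = Tv N (teval e ta) (teval e tb) (teval e tt) X).
Proof. intros. exists (Tdf N ta tb tt X tr). intro. apply Tdf_ok. Qed.

Definition CB (N : nat) (b : cbexp) (v : nat -> Z) : Prop := cbeval (st N v 0) b = true.

Definition Step (N : nat) (b : cbexp) (R : state -> state -> Prop) (a bb t : Z) : Prop :=
  CB N b (Tv N a bb t) /\ R (st N (Tv N a bb t) 0) (st N (Tv N a bb (t + 1)) 0).

Definition Body (N : nat) (b : cbexp) (R : state -> state -> Prop) (E : env) : Prop :=
  0 <= E 2%nat /\ 0 <= E 0%nat /\
  (forall X, (X < N)%nat -> Tv N (E 1%nat) (E 0%nat) 0 X = E (3 + X)%nat) /\
  (forall X, (X < N)%nat -> Tv N (E 1%nat) (E 0%nat) (E 2%nat) X = E (3 + (N + X))%nat) /\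
  (forall z, (0 <= scons z E 0%nat /\ scons z E 0%nat < scons z E 3%nat) ->
      Step N b R (scons z E 2%nat) (scons z E 1%nat) (scons z E 0%nat)) /\
  ~ CB N b (Tv N (E 1%nat) (E 0%nat) (E 2%nat)).

Lemma expr_Body : forall N b R, bok N b -> Rep N R -> expr (Body N b R).
Proof.
  intros N b R Hb HR. unfold Body.
  apply expr_and. apply (expr_le (TNum 0) (TVar 2)).
  apply expr_and. apply (expr_le (TNum 0) (TVar 0)).
  apply expr_and.
  { apply expr_bigand. intros X HX. eapply expr_ext.
    apply (expr_Tv N (TVar 1) (TVar 0) (TNum 0) X (TVar (3 + X))). intro; simpl; split; auto. }
  apply expr_and.
  { apply expr_bigand. intros X HX. eapply expr_ext.
    apply (expr_Tv N (TVar 1) (TVar 0) (TVar 2) X (TVar (3 + (N + X)))). intro; simpl; split; auto. }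
  apply expr_and.
  { apply (expr_all (fun E => (0 <= E 0%nat /\ E 0%nat < E 3%nat) -> Step N b R (E 2%nat) (E 1%nat) (E 0%nat))).
    apply expr_imp. apply expr_and. apply (expr_le (TNum 0) (TVar 0)). eapply expr_ext. apply (expr_le (TAdd (TVar 0) (TNum 1)) (TVar 3)). intro; simpl; lia.
    set (G := fun (E : env) (j : nat) => if (j <? N)%nat then Tv N (E 2%nat) (E 1%nat) (E 0%nat) j
                                      else Tv N (E 2%nat) (E 1%nat) (E 0%nat + 1) (j - N)).
    eapply expr_ext.
    - apply (expr_plug (N + N) G (fun F => cbeval (st N F 0) b = true /\ R (st N F 0) (st N F N))).
      apply expr_and. apply expr_cb; auto. apply HR.
      intros j Hj. unfold G. destruct (j <? N)%nat.
      + eapply expr_ext. apply (expr_Tv N (TVar 3) (TVar 2) (TVar 1) j (TVar 0)). intro; simpl; tauto.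
      + eapply expr_ext. apply (expr_Tv N (TVar 3) (TVar 2) (TAdd (TVar 1) (TNum 1)) (j - N) (TVar 0)).
        intro; simpl; tauto.
    - intro E. unfold Step, CB.
      replace (st N (vapp (N + N) (G E) E) 0) with (st N (Tv N (E 2%nat) (E 1%nat) (E 0%nat)) 0).
      replace (st N (vapp (N + N) (G E) E) N) with (st N (Tv N (E 2%nat) (E 1%nat) (E 0%nat + 1)) 0).
      tauto.
      + apply st_ext. intros X HX. unfold vapp, G.
        destruct (Nat.ltb_spec (N + X) (N + N)); try lia.
        destruct (Nat.ltb_spec (N + X) N); try lia. simpl. f_equal. lia.
      + apply st_ext. intros X HX. unfold vapp, G. simpl.
        destruct (Nat.ltb_spec X (N + N)); try lia.
        destruct (Nat.ltb_spec X N); try lia. }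
  { apply expr_not.
    set (G := fun (E : env) (j : nat) => Tv N (E 1%nat) (E 0%nat) (E 2%nat) j).
    eapply expr_ext.
    - apply (expr_plug N G (fun F => cbeval (st N F 0) b = true)).
      apply expr_cb; auto.
      intros j Hj. unfold G.
      eapply expr_ext. apply (expr_Tv N (TVar 2) (TVar 1) (TVar 3) j (TVar 0)). intro; simpl; tauto.
    - intro E. unfold CB.
      replace (st N (vapp N (G E) E) 0) with (st N (Tv N (E 1%nat) (E 0%nat) (E 2%nat)) 0). tauto.
      apply st_ext. intros X HX. unfold vapp, G. simpl.
      destruct (Nat.ltb_spec X N); try lia. }
Qed.

Lemma bound_ex : forall m (f : nat -> Z), exists K, forall j, (j < m)%nat -> f j <= K.
Proof.
  induction m; intros f. exists 0; intros; lia.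
  destruct (IHm f) as [K HK]. exists (Z.max K (f m)). intros j Hj.
  destruct (Nat.eq_dec j m). subst; lia. specialize (HK j ltac:(lia)). lia.
Qed.

Lemma W_sem : forall N b c e, bok N b -> cok N c ->
  ((exists k a bb, 0 <= k /\ 0 <= bb /\ (forall X, (X < N)%nat -> Tv N a bb 0 X = e X) /\
     (forall X, (X < N)%nat -> Tv N a bb k X = e (N + X)%nat) /\
     (forall z, (0 <= z /\ z < k) -> Step N b (exec c) a bb z) /\
     ~ CB N b (Tv N a bb k))
   <-> exec (While b c) (st N e 0) (st N e N)).
Proof.
  intros N b c e Hb Hc. rewrite while_iter. split.
  - intros [k [a [bb [Hk [Hbb [H0 [H1 [H2 H3]]]]]]]].
    exists (Z.to_nat k), (fun t => st N (Tv N a bb (Z.of_nat t)) 0).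
    split; [|split; [|split]].
    + apply st_ext. intros X HX. simpl. apply H0; auto.
    + rewrite Z2Nat.id by lia. apply st_ext. intros X HX. simpl. apply H1; auto.
    + intros t Ht. destruct (H2 (Z.of_nat t) ltac:(lia)) as [S1 S2]. split. exact S1.
      rewrite Nat2Z.inj_succ. unfold Z.succ. exact S2.
    + rewrite Z2Nat.id by lia. unfold CB in H3. destruct (cbeval _ b); auto. exfalso; auto.
  - intros [k [sq [E0 [Ek [Hstep Hend]]]]].
    assert (Hcut : forall t, (t <= k)%nat -> forall X, (N <= X)%nat -> sq t X = 0).
    { induction t; intros Ht X HX.
      - rewrite E0. unfold st. destruct (Nat.ltb_spec X N); auto; lia.
      - destruct (Hstep t ltac:(lia)) as [_ Hex].
        rewrite (exec_out _ _ _ Hex N Hc X HX). apply IHt; lia. }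
    set (f := fun j => let i := Nat.div2 j in
                       if Nat.even j then Z.max 0 (sq (i / N)%nat (i mod N)%nat)
                       else Z.max 0 (- sq (i / N)%nat (i mod N)%nat)).
    set (m := (2 * (S k * N))%nat).
    destruct (bound_ex m f) as [K HK].
    destruct (beta m f K) as [a [bb [Hbb Hab]]].
    { intros j Hj. split. unfold f. destruct (Nat.even j); lia. auto. }
    assert (Tv_eq : forall t X, (t <= k)%nat -> (X < N)%nat -> Tv N a bb (Z.of_nat t) X = sq t X).
    { intros t X Ht HX. unfold Tv.
      set (i := (t * N + X)%nat).
      assert (E1 : 2 * (Z.of_nat t * Z.of_nat N + Z.of_nat X) + 1 = Z.of_nat (2 * i) + 1) by (unfold i; lia).
      assert (E2 : 2 * (Z.of_nat t * Z.of_nat N + Z.of_nat X) + 2 = Z.of_nat (2 * i + 1) + 1) by (unfold i; lia).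
      rewrite E1, E2. unfold Zm.
      assert (Hi : (2 * i + 1 < m)%nat) by (unfold m, i; nia).
      destruct (Z.ltb_spec 0 (1 + (Z.of_nat (2 * i) + 1) * bb)); [| nia].
      destruct (Z.ltb_spec 0 (1 + (Z.of_nat (2 * i + 1) + 1) * bb)); [| nia].
      rewrite !Hab by lia. unfold f.
      rewrite Nat.div2_even, Nat.div2_odd', Nat.even_even, Nat.even_odd.
      assert (Ed : (i / N = t)%nat).
      { unfold i. rewrite Nat.div_add_l by lia. rewrite Nat.div_small by lia. lia. }
      assert (Em : (i mod N = X)%nat).
      { unfold i. rewrite Nat.add_comm, Nat.Div0.mod_add. apply Nat.mod_small; lia. }
      rewrite Ed, Em. lia. }
    assert (st_Tv : forall t, (t <= k)%nat -> st N (Tv N a bb (Z.of_nat t)) 0 = sq t).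
    { intros t Ht. apply functional_extensionality; intro X. unfold st.
      destruct (Nat.ltb_spec X N). apply Tv_eq; auto. symmetry; apply Hcut; auto. }
    exists (Z.of_nat k), a, bb. split; [lia|]. split; [lia|]. split; [|split; [|split]].
    + intros X HX. change 0 with (Z.of_nat 0). rewrite Tv_eq by lia. rewrite E0.
      unfold st. destruct (Nat.ltb_spec X N); auto; lia.
    + intros X HX. rewrite Tv_eq by lia. rewrite Ek.
      unfold st. destruct (Nat.ltb_spec X N); auto; lia.
    + intros z Hz. unfold Step, CB.
      replace z with (Z.of_nat (Z.to_nat z)) by lia.
      replace (Z.of_nat (Z.to_nat z) + 1) with (Z.of_nat (S (Z.to_nat z))) by lia.
      rewrite !st_Tv by lia. apply Hstep. lia.
    + unfold CB. rewrite st_Tv by lia. rewrite Hend. discriminate.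
Qed.

Lemma rep_while : forall N b c, bok N b -> cok N c -> Rep N (exec c) -> Rep N (exec (While b c)).
Proof.
  intros N b c Hb Hc HR. unfold Rep.
  eapply expr_ext.
  apply expr_ex, expr_ex, expr_ex, (expr_Body N b (exec c) Hb HR).
  intro e. rewrite <- W_sem by auto.
  split; intros [k [a [bb H]]]; exists k, a, bb; exact H.
Qed.
Local Open Scope nat_scope.

Lemma rep_all : forall c N, cok N c -> Rep N (exec c).
Proof.
  induction c as [| l a | c1 IHc1 c2 IHc2 | b c1 IHc1 c2 IHc2 | b c IHc | c1 IHc1 c2 IHc2];
    simpl; intros N Hc.
  - apply rep_skip.
  - apply rep_assign; tauto.
  - destruct Hc as [H1 H2]. apply (rep_seqc N c1 c2 H1 (IHc1 N H1) (IHc2 N H2)).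
  - destruct Hc as [Hb [H1 H2]]. eapply expr_ext.
    apply (expr_or _ _ (expr_and _ _ (expr_cb N b Hb) (IHc1 N H1))
                      (expr_and _ _ (expr_not _ (expr_cb N b Hb)) (IHc2 N H2))).
    intro e; simpl. rewrite if_char.
    destruct (cbeval (st N e 0) b); split;
      (intros [[H3 H4]|[H3 H4]]; [left|right]; split; auto; try congruence; exfalso; congruence).
  - destruct Hc as [Hb Hc]. apply rep_while; auto.
  - destruct Hc as [H1 H2]. eapply expr_ext.
    apply (expr_and _ _ (rep_seqc N c1 c2 H1 (IHc1 N H1) (IHc2 N H2))
                        (rep_seqc N c2 c1 H2 (IHc2 N H2) (IHc1 N H1))).
    intro e; simpl. rewrite par_char. tauto.
Qed.

Theorem mainTheorem6 :
  forall (c : com) (B : assn),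
    exists w : assn,
      forall (I : interp) (s : state), sat I s w <-> wp I c B s.
Proof.
  intros c B.
  destruct (cok_ex c) as [N Hc].
  destruct (rep_all c N Hc) as [f Hf].
  destruct (vlt_ex B) as [M HM].
  set (rho := fun j => if j <? N then ALoc j else if j <? (N + N) then AVar (M + (j - N)) else ANum 0%Z).
  set (sg := fun X => if X <? N then AVar (M + X) else ALoc X).
  exists (forallN M N (AImp (ftr rho (M + N) f) (bsub sg B))).
  intros I s. rewrite sat_forallN. simpl.
  assert (KEY : forall v, (sat (updN I M N v) s (ftr rho (M + N) f) ->
                           sat (updN I M N v) s (bsub sg B)) <->
                          (exec c (st N s 0) (st N v 0) -> sat I (merge N s v) B)).
  { intro v.
    set (ev := fun j => if j <? N then s j else if j <? (N + N) then v (j - N) else 0%Z).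
    rewrite (ftr_ok f rho (M + N) (updN I M N v) s ev).
    2:{ intro j. unfold rho, ev, updN.
        destruct (Nat.ltb_spec j N); simpl; auto.
        destruct (Nat.ltb_spec j ((N + N))); simpl; auto.
        destruct (Nat.leb_spec M (M + (j - N))), (Nat.ltb_spec (M + (j - N)) (M + N)); simpl; try lia.
        f_equal; lia. }
    2:{ intros j i Hi. unfold rho.
        destruct (Nat.ltb_spec j N); simpl; auto.
        destruct (Nat.ltb_spec j ((N + N))); simpl; auto. lia. }
    rewrite Hf.
    replace (st N ev 0) with (st N s 0).
    2:{ apply st_ext. intros X HX. unfold ev; simpl. destruct (Nat.ltb_spec X N); auto; lia. }
    replace (st N ev N) with (st N v 0).
    2:{ apply st_ext. intros X HX. unfold ev.
        destruct (Nat.ltb_spec (N + X) N), (Nat.ltb_spec (N + X) ((N + N))); try lia. f_equal; lia. }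
    rewrite (sat_bsub B M) by (auto; intros X i Hi; unfold sg; destruct (X <? N); simpl; auto; lia).
    replace (fun X : Loc => aeval (updN I M N v) s (sg X)) with (merge N s v).
    2:{ apply functional_extensionality; intro X. unfold merge, sg, updN.
        destruct (Nat.ltb_spec X N); simpl; auto.
        destruct (Nat.leb_spec M (M + X)), (Nat.ltb_spec (M + X) (M + N)); simpl; try lia.
        f_equal; lia. }
    rewrite (sat_agree B M (updN I M N v) I) by (auto; intros i Hi; unfold updN;
      destruct (Nat.leb_spec M i); simpl; auto; lia).
    tauto. }
  setoid_rewrite KEY. unfold wp. split.
  - intros H s' Hs'. rewrite (exec_cut_iff N c s s' Hc) in Hs'. destruct Hs' as [H1 H2].
    specialize (H s' H2).
    replace (merge N s s') with s' in H. exact H.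
    apply functional_extensionality; intro X; unfold merge.
    destruct (Nat.ltb_spec X N); auto.
  - intros H v Hv. apply H. rewrite (exec_cut_iff N c); auto. split.
    + intros X HX. unfold merge. destruct (Nat.ltb_spec X N); auto; lia.
    + replace (st N (merge N s v) 0) with (st N v 0); auto.
      apply st_ext. intros X HX. unfold merge. destruct (Nat.ltb_spec (0 + X) N); auto; lia.
Qed.
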